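(* In the free model of ASD, let $(\beta^n,A_n)_{n:N}$ be a lattice basis for an object $X$, with $(n\ll m)\equiv A_n\beta^m$. Then for all $n:N$ and $\phi,\psi:\Sigma^X$: $A_n\top\Leftrightarrow(n\ll1)$, $A_n\bot\Leftrightarrow(n\ll0)$, $A_n(\phi\wedge\psi)\Leftrightarrow\exists p,q.\ (n\ll p\star q)\wedge A_p\phi\wedge A_q\psi$, $A_n(\phi\vee\psi)\Leftrightarrow\exists p,q.\ (n\ll p+q)\wedge A_p\phi\wedge A_q\psi$. In particular (Wilker property) $(n\ll p+q)\Leftrightarrow\exists p',q'.\ (n\ll p'+q')\wedge(p'\ll p)\wedge(q'\ll q)$.
   Context: ASD setting. $\mathcal S$ is a category with finite products and an object $\Sigma$ for which all exponentials $\Sigma^X$ exist; we reason in its simply typed $\lambda$-calculus (terms in a context $\Gamma$). $(\Sigma,\top,\bot,\wedge,\vee)$ is an internal distributive lattice, and each $\Sigma^X$ is a distributive lattice pointwise; the intrinsic order is $\phi\le\psi$ iff $\phi=\phi\wedge\psi$; on $\Sigma$ it is written $\Rightarrow$ and equality $\Leftrightarrow$. Phoa principle: $F\sigma\Leftrightarrow F\bot\vee(\sigma\wedge F\top)$ for $F:\Sigma^\Sigma,\sigma:\Sigma$. An object $N$ is overt discrete if it has an equality predicate $(=_N):N\times N\to\Sigma$ with $\Gamma\vdash n=m$ iff $\Gamma\vdash(n=_Nm)\Leftrightarrow\top$, and an existential quantifier $\exists_N:\Sigma^N\to\Sigma$ left adjoint to $\Sigma^{!}:\Sigma\to\Sigma^N$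 (written $\exists n.\phi n$). There is a natural numbers object $\mathbb N$, which is overt discrete. For overt discrete $N$, $\mathrm{Fin}(N)$ is the overt discrete object of finite lists over $N$, with membership $n\in\ell$ and bounded quantifiers $\exists n\in\ell$, $\forall n\in\ell$ defined by list recursion. Scott principle: for overt discrete $N$, $\Phi:\Sigma^{\Sigma^N},\xi:\Sigma^N$: $\Phi\xi\Leftrightarrow\exists\ell:\mathrm{Fin}(N).\ \Phi(\lambda n.n\in\ell)\wedge\forall n\in\ell.\xi n$. Sobriety: $P:\Sigma^{\Sigma^X}$ is prime if $\mathcal FP\Leftrightarrow P(\lambda x.\mathcal F(\lambda\phi.\phi x))$ for all $\mathcal F:\Sigma^{\Sigma^{\Sigma^X}}$; then there is a unique $a:X$ with $P=\lambda\phi.\phi a$. A nucleus is $E:\Sigma^Y\to\Sigma^Y$ with $E(\lambda y.\mathcal F(\lambda\phi.\phi y))=E(\lambda y.\mathcal F(\lambda\phi.E\phi y))$ for all $\mathcal F:\Sigma^{\Sigma^{\Sigma^Y}}$; for every nucleus there is a $\Sigma$-split subobject $i:X\to Y$, i.e. one with $I:\Sigma^X\to\Sigma^Y$, $\Sigma^i\circ I=\mathrm{id}$, and moreover $I\circ\Sigma^i=E$. The free model is the term model generated by these axioms; its objects are the definable ones. Bases. An effective basis for $X$ indexed by an overt discrete $N$ is a pair of families $n:N\vdash\beta^n:\Sigma^X$ and $n:N\vdash A_n:\Sigma^{\Sigma^X}$ with $\phi=\lambda x.\exists n.\ A_n\phi\wedge\beta^nx$ for all $\phi:\Sigma^X$.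 It is a $\vee$-basis if there are $0:N$ and $+:N\times N\to N$ with $\beta^0=\bot$, $A_0=\lambda\phi.\top$, $\beta^{n+m}=\beta^n\vee\beta^m$, $A_{n+m}=A_n\wedge A_m$; an $\wedge$-basis if there are $1:N$ and $\star:N\times N\to N$ with $\beta^1=\top$, $\beta^{n\star m}=\beta^n\wedge\beta^m$, $A_n\le A_{n\star m}$, $A_m\le A_{n\star m}$; a lattice basis if both. *)

(* Defs.v *)
(* A model of Abstract Stone Duality (ASD),
   presented as a category with finite products and exponentials Sigma^X,
   whose simply typed lambda-calculus is rendered via generalized elements:
   a term  Gamma |- t : Y  is a morphism  Hom Gamma Y. *)

Set Implicit Arguments.
Unset Strict Implicit.

Record CatData : Type := {
  Ob : Type;
  Hom : Ob -> Ob -> Type;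
  idm : forall X : Ob, Hom X X;
  comp : forall X Y Z : Ob, Hom Y Z -> Hom X Y -> Hom X Z;
  one : Ob;
  bang : forall X : Ob, Hom X one;
  cprod : Ob -> Ob -> Ob;
  cpair : forall G X Y : Ob, Hom G X -> Hom G Y -> Hom G (cprod X Y);
  cp1 : forall X Y : Ob, Hom (cprod X Y) X;
  cp2 : forall X Y : Ob, Hom (cprod X Y) Y;
  Sig : Ob;
  Exp : Ob -> Ob;
  ev : forall X : Ob, Hom (cprod (Exp X) X) Sig;
  lam : forall G X : Ob, Hom (cprod G X) Sig -> Hom G (Exp X);
  stop : Hom one Sig;
  sbot : Hom one Sig;
  smeet : Hom (cprod Sig Sig) Sig;
  sjoin : Hom (cprod Sig Sig) Sig
}.

Arguments Hom {c} X Y.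
Arguments idm {c} X.
Arguments comp {c X Y Z} g f.
Arguments one {c}.
Arguments bang {c} X.
Arguments cprod {c} X Y.
Arguments cpair {c G X Y} f g.
Arguments cp1 {c X Y}.
Arguments cp2 {c X Y}.
Arguments Sig {c}.
Arguments Exp {c} X.
Arguments ev {c} X.
Arguments lam {c G X} f.
Arguments stop {c}.
Arguments sbot {c}.
Arguments smeet {c}.
Arguments sjoin {c}.

Section Helpers.
Context {C : CatData}.

Definition wk {G Y X : Ob C} (t : Hom G X) : Hom (cprod G Y) X := comp t cp1.

Definition app {G X : Ob C} (f : Hom G (Exp X)) (a : Hom G X) : Hom G Sig :=
  comp (ev X) (cpair f a).

Definition topG (G : Ob C) : Hom G Sig := comp stop (bang G).
Definition botG (G : Ob C) : Hom G Sig := comp sbot (bang G).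
Definition meetG {G : Ob C} (a b : Hom G Sig) : Hom G Sig := comp smeet (cpair a b).
Definition joinG {G : Ob C} (a b : Hom G Sig) : Hom G Sig := comp sjoin (cpair a b).
Definition leS {G : Ob C} (a b : Hom G Sig) : Prop := a = meetG a b.

Definition topE (G X : Ob C) : Hom G (Exp X) := lam (topG (cprod G X)).
Definition botE (G X : Ob C) : Hom G (Exp X) := lam (botG (cprod G X)).
Definition meetE {G X : Ob C} (f g : Hom G (Exp X)) : Hom G (Exp X) :=
  lam (meetG (app (wk f) cp2) (app (wk g) cp2)).
Definition joinE {G X : Ob C} (f g : Hom G (Exp X)) : Hom G (Exp X) :=
  lam (joinG (app (wk f) cp2) (app (wk g) cp2)).
Definition leE {G X : Ob C} (f g : Hom G (Exp X)) : Prop := f = meetE f g.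

Definition SigMap {X Y : Ob C} (i : Hom X Y) : Hom (Exp Y) (Exp X) :=
  lam (app cp1 (comp i cp2)).

(* the term  lambda x. F (lambda phi. phi x)  in context D *)
Definition focusTerm {D X : Ob C} (F : Hom D (Exp (Exp (Exp X)))) : Hom D (Exp X) :=
  lam (app (wk F) (lam (app cp2 (comp cp2 cp1)))).

(* prime elements of Sigma^(Sigma^X) (the condition for all F, in any
   extended context obtained by substitution s : D -> G) *)
Definition prime {G X : Ob C} (P : Hom G (Exp (Exp X))) : Prop :=
  forall (D : Ob C) (s : Hom D G) (F : Hom D (Exp (Exp (Exp X)))),
    app F (comp P s) = app (comp P s) (focusTerm F).

Definition etaPt {G X : Ob C} (a : Hom G X) : Hom G (Exp (Exp X)) :=
  lam (app cp2 (wk a)).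

Definition nucleus {Y : Ob C} (E : Hom (Exp Y) (Exp Y)) : Prop :=
  forall (D : Ob C) (F : Hom D (Exp (Exp (Exp Y)))),
    comp E (lam (app (wk F) (lam (app cp2 (comp cp2 cp1)))))
    = comp E (lam (app (wk F) (lam (app (comp E cp2) (comp cp2 cp1))))).

Definition mono {X Y : Ob C} (i : Hom X Y) : Prop :=
  forall (G : Ob C) (f g : Hom G X), comp i f = comp i g -> f = g.

End Helpers.

Record CatLaws (C : CatData) : Prop := {
  comp_idl : forall (X Y : Ob C) (f : Hom X Y), comp (idm Y) f = f;
  comp_idr : forall (X Y : Ob C) (f : Hom X Y), comp f (idm X) = f;
  comp_assoc : forall (X Y Z W : Ob C) (h : Hom Z W) (g : Hom Y Z) (f : Hom X Y),
      comp h (comp g f) = comp (comp h g) f;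
  bang_uniq : forall (X : Ob C) (f : Hom X one), f = bang X;
  cp1_pair : forall (G X Y : Ob C) (f : Hom G X) (g : Hom G Y), comp cp1 (cpair f g) = f;
  cp2_pair : forall (G X Y : Ob C) (f : Hom G X) (g : Hom G Y), comp cp2 (cpair f g) = g;
  pair_eta : forall (G X Y : Ob C) (h : Hom G (cprod X Y)),
      cpair (comp cp1 h) (comp cp2 h) = h;
  ev_lam : forall (G X : Ob C) (f : Hom (cprod G X) Sig),
      comp (ev X) (cpair (comp (lam f) cp1) cp2) = f;
  lam_eta : forall (G X : Ob C) (h : Hom G (Exp X)),
      lam (comp (ev X) (cpair (comp h cp1) cp2)) = h;
  meet_assoc : forall (G : Ob C) (a b c : Hom G Sig), meetG a (meetG b c) = meetG (meetG a b) c;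
  join_assoc : forall (G : Ob C) (a b c : Hom G Sig), joinG a (joinG b c) = joinG (joinG a b) c;
  meet_comm : forall (G : Ob C) (a b : Hom G Sig), meetG a b = meetG b a;
  join_comm : forall (G : Ob C) (a b : Hom G Sig), joinG a b = joinG b a;
  meet_absorb : forall (G : Ob C) (a b : Hom G Sig), meetG a (joinG a b) = a;
  join_absorb : forall (G : Ob C) (a b : Hom G Sig), joinG a (meetG a b) = a;
  meet_top : forall (G : Ob C) (a : Hom G Sig), meetG a (topG G) = a;
  join_bot : forall (G : Ob C) (a : Hom G Sig), joinG a (botG G) = a;
  meet_join_distr : forall (G : Ob C) (a b c : Hom G Sig),
      meetG a (joinG b c) = joinG (meetG a b) (meetG a c);
  phoa : forall (G : Ob C) (F : Hom G (Exp Sig)) (s : Hom G Sig),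
      app F s = joinG (app F (botG G)) (meetG s (app F (topG G)))
}.

Record OvertDiscrete (C : CatData) (N : Ob C) : Type := {
  eqd : Hom (cprod N N) Sig;
  exd : Hom (Exp N) Sig;
  eqd_spec : forall (G : Ob C) (n m : Hom G N),
      n = m <-> comp eqd (cpair n m) = topG G;
  exd_adj : forall (G : Ob C) (phi : Hom G (Exp N)) (s : Hom G Sig),
      leS (comp exd phi) s <-> leE phi (lam (wk s))
}.
Arguments eqd {C N} o.
Arguments exd {C N} o.

Definition exN {C : CatData} {N G : Ob C} (o : OvertDiscrete N)
  (body : Hom (cprod G N) Sig) : Hom G Sig := comp (exd o) (lam body).

Record NNO (C : CatData) : Type := {
  Nat : Ob C;
  zero : Hom one Nat;
  succ : Hom Nat Nat;
  natrec : forall G X : Ob C, Hom G X -> Hom (cprod G X) X -> Hom (cprod G Nat) X;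
  natrec_zero : forall (G X : Ob C) (g : Hom G X) (h : Hom (cprod G X) X),
      comp (natrec g h) (cpair (idm G) (comp zero (bang G))) = g;
  natrec_succ : forall (G X : Ob C) (g : Hom G X) (h : Hom (cprod G X) X),
      comp (natrec g h) (cpair cp1 (comp succ cp2)) = comp h (cpair cp1 (natrec g h));
  natrec_uniq : forall (G X : Ob C) (g : Hom G X) (h : Hom (cprod G X) X) (r : Hom (cprod G Nat) X),
      comp r (cpair (idm G) (comp zero (bang G))) = g ->
      comp r (cpair cp1 (comp succ cp2)) = comp h (cpair cp1 r) ->
      r = natrec g h
}.
Arguments Nat {C} n.

Record ListObj (C : CatData) (N : Ob C) : Type := {
  FinN : Ob C;
  lnil : Hom one FinN;
  lcons : Hom (cprod N FinN) FinN;
  lrec : forall G X : Ob C, Hom G X -> Hom (cprod (cprod G N) X) X -> Hom (cprod G FinN) X;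
  lrec_nil : forall (G X : Ob C) (g : Hom G X) (h : Hom (cprod (cprod G N) X) X),
      comp (lrec g h) (cpair (idm G) (comp lnil (bang G))) = g;
  lrec_cons : forall (G X : Ob C) (g : Hom G X) (h : Hom (cprod (cprod G N) X) X),
      comp (lrec g h) (cpair (comp cp1 cp1) (comp lcons (cpair (comp cp2 cp1) cp2)))
      = comp h (cpair cp1 (comp (lrec g h) (cpair (comp cp1 cp1) cp2)));
  lrec_uniq : forall (G X : Ob C) (g : Hom G X) (h : Hom (cprod (cprod G N) X) X) (r : Hom (cprod G FinN) X),
      comp r (cpair (idm G) (comp lnil (bang G))) = g ->
      comp r (cpair (comp cp1 cp1) (comp lcons (cpair (comp cp2 cp1) cp2)))
        = comp h (cpair cp1 (comp r (cpair (comp cp1 cp1) cp2))) ->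
      r = lrec g h
}.
Arguments FinN {C N} l.
Arguments lrec {C N} l {G X} g h.

(* membership  n \in l  defined by list recursion:
   n \in nil = bot,  n \in (m :: l) = (n = m) \/ (n \in l) *)
Definition memb {C : CatData} {N : Ob C} (o : OvertDiscrete N) (L : ListObj N)
  : Hom (cprod N (FinN L)) Sig :=
  lrec L (G:=N) (X:=Sig) (botG N)
    (joinG (comp (eqd o) (cpair (comp cp1 cp1) (comp cp2 cp1))) cp2).

(* bounded universal quantifier  forall n \in l. xi n,  by list recursion:
   nil |-> top,  (m :: l) |-> xi m /\ forall n \in l. xi n *)
Definition allIn {C : CatData} {N : Ob C} (L : ListObj N)
  : Hom (cprod (Exp N) (FinN L)) Sig :=
  lrec L (G:=Exp N) (X:=Sig) (topG (Exp N))
    (meetG (app (comp cp1 cp1) (comp cp2 cp1)) cp2).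

Record ASDModel : Type := {
  cat : CatData;
  cat_laws : CatLaws cat;
  natobj : NNO cat;
  nat_od : OvertDiscrete (Nat natobj);
  fin : forall (N : Ob cat), OvertDiscrete N -> ListObj N;
  fin_od : forall (N : Ob cat) (o : OvertDiscrete N), OvertDiscrete (FinN (fin o));
  scott : forall (N : Ob cat) (o : OvertDiscrete N) (G : Ob cat)
      (Phi : Hom G (Exp (Exp N))) (xi : Hom G (Exp N)),
      app Phi xi =
      exN (fin_od o)
        (meetG (app (wk Phi) (lam (comp (memb o (fin o)) (cpair cp2 (comp cp2 cp1)))))
               (comp (allIn (fin o)) (cpair (wk xi) cp2)));
  sober : forall (X G : Ob cat) (P : Hom G (Exp (Exp X))),
      prime P -> exists! a : Hom G X, P = etaPt a;
  nucleus_split : forall (Y : Ob cat) (E : Hom (Exp Y) (Exp Y)),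
      nucleus E ->
      exists (X : Ob cat) (i : Hom X Y) (I : Hom (Exp X) (Exp Y)),
        mono i /\ comp (SigMap i) I = idm (Exp X) /\ comp I (SigMap i) = E
}.

Section Bases.
Context {C : CatData} {X N : Ob C} (o : OvertDiscrete N)
        (beta : Hom N (Exp X)) (A : Hom N (Exp (Exp X))).

Definition Aapp {G : Ob C} (n : Hom G N) (phi : Hom G (Exp X)) : Hom G Sig :=
  app (comp A n) phi.

Definition wb {G : Ob C} (n m : Hom G N) : Hom G Sig := Aapp n (comp beta m).

(* effective basis: phi = lambda x. exists n. A_n phi /\ beta^n x *)
Definition effective_basis : Prop :=
  forall (G : Ob C) (phi : Hom G (Exp X)),
    phi = lam (exN o (meetG (app (comp A cp2) (comp phi (comp cp1 cp1)))
                            (app (comp beta cp2) (comp cp2 cp1)))).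

Definition join_basis (z : Hom one N) (pl : Hom (cprod N N) N) : Prop :=
  effective_basis /\
  comp beta z = botE one X /\
  comp A z = topE one (Exp X) /\
  (forall (G : Ob C) (n m : Hom G N),
      comp beta (comp pl (cpair n m)) = joinE (comp beta n) (comp beta m)) /\
  (forall (G : Ob C) (n m : Hom G N),
      comp A (comp pl (cpair n m)) = meetE (comp A n) (comp A m)).

Definition meet_basis (u : Hom one N) (st : Hom (cprod N N) N) : Prop :=
  effective_basis /\
  comp beta u = topE one X /\
  (forall (G : Ob C) (n m : Hom G N),
      comp beta (comp st (cpair n m)) = meetE (comp beta n) (comp beta m)) /\
  (forall (G : Ob C) (n m : Hom G N),
      leE (comp A n) (comp A (comp st (cpair n m)))) /\
  (forall (G : Ob C) (n m : Hom G N),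
      leE (comp A m) (comp A (comp st (cpair n m)))).

Definition lattice_basis (z : Hom one N) (pl : Hom (cprod N N) N)
  (u : Hom one N) (st : Hom (cprod N N) N) : Prop :=
  join_basis z pl /\ meet_basis u st.

End Bases.

(* Main.v *)
Require Import Defs.
From Stdlib Require Import Setoid.
Set Implicit Arguments.
Unset Strict Implicit.
Section All.
Context (C: CatData) (L : CatLaws C).

Lemma cA (X Y Z W : Ob C) (h : Hom Z W) (g : Hom Y Z) (f : Hom X Y) :
  comp (comp h g) f = comp h (comp g f).
Proof. symmetry; apply (comp_assoc L). Qed.
Lemma c1p (G X Y : Ob C) (f : Hom G X) (g : Hom G Y) : comp cp1 (cpair f g) = f.
Proof. apply (cp1_pair L). Qed.
Lemma c2p (G X Y : Ob C) (f : Hom G X) (g : Hom G Y) : comp cp2 (cpair f g) = g.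
Proof. apply (cp2_pair L). Qed.
Lemma c1pr (D G X Y : Ob C) (f : Hom G X) (g : Hom G Y) (h : Hom D G) :
  comp cp1 (comp (cpair f g) h) = comp f h.
Proof. rewrite <- cA, c1p; reflexivity. Qed.
Lemma c2pr (D G X Y : Ob C) (f : Hom G X) (g : Hom G Y) (h : Hom D G) :
  comp cp2 (comp (cpair f g) h) = comp g h.
Proof. rewrite <- cA, c2p; reflexivity. Qed.
Lemma cpc (D G X Y : Ob C) (f : Hom G X) (g : Hom G Y) (h : Hom D G) :
  comp (cpair f g) h = cpair (comp f h) (comp g h).
Proof.
  rewrite <- (pair_eta L (comp (cpair f g) h)).
  rewrite c1pr, c2pr. reflexivity.
Qed.
Lemma cidl (X Y : Ob C) (f : Hom X Y) : comp (idm Y) f = f.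
Proof. apply (comp_idl L). Qed.
Lemma cidr (X Y : Ob C) (f : Hom X Y) : comp f (idm X) = f.
Proof. apply (comp_idr L). Qed.
Lemma peta (G X Y : Ob C) (h : Hom G (cprod X Y)) : cpair (comp cp1 h) (comp cp2 h) = h.
Proof. apply (pair_eta L). Qed.
Lemma p12 (X Y : Ob C) : cpair (@cp1 C X Y) cp2 = idm _.
Proof. rewrite <- (peta (idm _)), !cidr. reflexivity. Qed.
Lemma bangc (G D : Ob C) (s : Hom D G) : comp (bang G) s = bang D.
Proof. apply (bang_uniq L). Qed.
Lemma appc (D G X : Ob C) (f : Hom G (Exp X)) (a : Hom G X) (s : Hom D G) :
  comp (app f a) s = app (comp f s) (comp a s).
Proof. unfold app. rewrite cA, cpc. reflexivity. Qed.
Lemma meetc (D G : Ob C) (a b : Hom G Sig) (s : Hom D G) :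
  comp (meetG a b) s = meetG (comp a s) (comp b s).
Proof. unfold meetG. rewrite cA, cpc. reflexivity. Qed.
Lemma joinc (D G : Ob C) (a b : Hom G Sig) (s : Hom D G) :
  comp (joinG a b) s = joinG (comp a s) (comp b s).
Proof. unfold joinG. rewrite cA, cpc. reflexivity. Qed.
Lemma topc (D G : Ob C) (s : Hom D G) : comp (topG G) s = topG D.
Proof. unfold topG. rewrite cA, bangc. reflexivity. Qed.
Lemma botc (D G : Ob C) (s : Hom D G) : comp (botG G) s = botG D.
Proof. unfold botG. rewrite cA, bangc. reflexivity. Qed.
Lemma lamc (D G X : Ob C) (f : Hom (cprod G X) Sig) (s : Hom D G) :
  comp (lam f) s = lam (comp f (cpair (comp s cp1) cp2)).
Proof.
  rewrite <- (lam_eta L (comp (lam f) s)).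
  f_equal. rewrite <- (ev_lam L f) at 2.
  rewrite !cA, cpc, !cA, c1p, c2p. reflexivity.
Qed.
Lemma betaL (G X : Ob C) (f : Hom (cprod G X) Sig) (a : Hom G X) :
  app (lam f) a = comp f (cpair (idm G) a).
Proof.
  unfold app. rewrite <- (ev_lam L f) at 2.
  rewrite cA, cpc, cA, c1p, c2p, cidr. reflexivity.
Qed.
Lemma lam_inj (G X : Ob C) (f g : Hom (cprod G X) Sig) : lam f = lam g -> f = g.
Proof. intro H. rewrite <- (ev_lam L f), <- (ev_lam L g), H. reflexivity. Qed.
Lemma lam_ext (G X : Ob C) (f g : Hom G (Exp X)) :
  app (comp f cp1) cp2 = app (comp g cp1) cp2 -> f = g.
Proof. intro H. rewrite <- (lam_eta L f), <- (lam_eta L g). exact (f_equal lam H). Qed.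
Lemma exNc {N} (o : OvertDiscrete N) (D G : Ob C) (b : Hom (cprod G N) Sig) (s : Hom D G) :
  comp (exN o b) s = exN o (comp b (cpair (comp s cp1) cp2)).
Proof. unfold exN. rewrite cA, lamc. reflexivity. Qed.

Ltac cs := repeat (rewrite ?cA, ?c1p, ?c2p, ?c1pr, ?c2pr, ?cpc,
   ?cidl, ?cidr, ?p12, ?peta, ?bangc, ?appc, ?meetc, ?joinc,
   ?topc, ?botc, ?lamc, ?betaL, ?exNc).
Section Lat.
Context (G : Ob C).
Implicit Types a b c d : Hom G Sig.
Notation "a ∧ b" := (meetG a b) (at level 40, left associativity).
Notation "a ∨ b" := (joinG a b) (at level 50, left associativity).
Notation "a ≤ b" := (leS a b) (at level 70).

Lemma mA a b c : a ∧ (b ∧ c) = a ∧ b ∧ c. Proof. apply (meet_assoc L). Qed.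
Lemma jA a b c : a ∨ (b ∨ c) = a ∨ b ∨ c. Proof. apply (join_assoc L). Qed.
Lemma mC a b : a ∧ b = b ∧ a. Proof. apply (meet_comm L). Qed.
Lemma jC a b : a ∨ b = b ∨ a. Proof. apply (join_comm L). Qed.
Lemma mabs a b : a ∧ (a ∨ b) = a. Proof. apply (meet_absorb L). Qed.
Lemma jabs a b : a ∨ (a ∧ b) = a. Proof. apply (join_absorb L). Qed.
Lemma mT a : a ∧ topG G = a. Proof. apply (meet_top L). Qed.
Lemma jB a : a ∨ botG G = a. Proof. apply (join_bot L). Qed.
Lemma mD a b c : a ∧ (b ∨ c) = a ∧ b ∨ a ∧ c. Proof. apply (meet_join_distr L). Qed.
Lemma mI a : a ∧ a = a.
Proof. rewrite <- (jabs a a) at 2. apply mabs. Qed.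
Lemma jI a : a ∨ a = a.
Proof. rewrite <- (mabs a a) at 2. apply jabs. Qed.
Lemma leJ a b : a ≤ b <-> a ∨ b = b.
Proof. unfold leS; split; intro H.
  - rewrite H, jC, mC. apply jabs.
  - rewrite <- H. symmetry. apply mabs. Qed.
Lemma le_refl a : a ≤ a. Proof. unfold leS. now rewrite mI. Qed.
Lemma le_trans a b c : a ≤ b -> b ≤ c -> a ≤ c.
Proof. unfold leS; intros H1 H2. rewrite H1 at 2. rewrite <- mA, <- H2. exact H1. Qed.
Lemma le_anti a b : a ≤ b -> b ≤ a -> a = b.
Proof. unfold leS; intros H1 H2. rewrite H1 at 1. rewrite mC. symmetry. exact H2. Qed.
Lemma meet_l a b : a ∧ b ≤ a.
Proof. unfold leS. rewrite <- mA, (mC b a), mA, mI. reflexivity. Qed.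
Lemma meet_r a b : a ∧ b ≤ b.
Proof. rewrite mC. apply meet_l. Qed.
Lemma le_meet a b c : c ≤ a -> c ≤ b -> c ≤ a ∧ b.
Proof. unfold leS; intros H1 H2. rewrite mA, <- H1. exact H2. Qed.
Lemma join_l a b : a ≤ a ∨ b.
Proof. unfold leS. now rewrite mabs. Qed.
Lemma join_r a b : b ≤ a ∨ b.
Proof. rewrite jC. apply join_l. Qed.
Lemma join_le a b c : a ≤ c -> b ≤ c -> a ∨ b ≤ c.
Proof. rewrite !leJ; intros H1 H2. rewrite <- jA, H2. exact H1. Qed.
Lemma le_top a : a ≤ topG G. Proof. unfold leS. now rewrite mT. Qed.
Lemma bot_le a : botG G ≤ a. Proof. apply leJ. rewrite jC. apply jB. Qed.
Lemma meet_mono a b c d : a ≤ b -> c ≤ d -> a ∧ c ≤ b ∧ d.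
Proof. intros; apply le_meet.
  - eapply le_trans; [apply meet_l|assumption].
  - eapply le_trans; [apply meet_r|assumption]. Qed.
Lemma join_mono a b c d : a ≤ b -> c ≤ d -> a ∨ c ≤ b ∨ d.
Proof. intros; apply join_le.
  - eapply le_trans; [eassumption|apply join_l].
  - eapply le_trans; [eassumption|apply join_r]. Qed.
Lemma Tm a : topG G ∧ a = a. Proof. rewrite mC; apply mT. Qed.
Lemma mDr a b c : (b ∨ c) ∧ a = b ∧ a ∨ c ∧ a.
Proof. rewrite !(mC _ a). apply mD. Qed.

End Lat.
Lemma phoa_mono (G : Ob C) (F : Hom G (Exp Sig)) (a b : Hom G Sig) :
  leS a b -> leS (app F a) (app F b).
Proof. intro H. rewrite (phoa L F a), (phoa L F b).
  apply join_mono; [apply le_refl|]. apply meet_mono; [exact H|apply le_refl]. Qed.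
Lemma strength (G : Ob C) (F : Hom G (Exp Sig)) (s : Hom G Sig) :
  meetG s (app F s) = meetG s (app F (topG G)).
Proof.
  assert (H : leS (app F (botG G)) (app F (topG G))) by (apply phoa_mono; apply bot_le).
  rewrite (phoa L F s), mD, mA, mI, <- mD.
  rewrite leJ in H. rewrite H. reflexivity.
Qed.

Lemma lamE (G X : Ob C) (h : Hom G (Exp X)) : lam (app (comp h cp1) cp2) = h.
Proof. apply (lam_eta L). Qed.
Lemma Bm (G : Ob C) (a : Hom G Sig) : meetG (botG G) a = botG G.
Proof. symmetry. apply bot_le. Qed.
Lemma mB (G : Ob C) (a : Hom G Sig) : meetG a (botG G) = botG G.
Proof. rewrite mC. apply Bm. Qed.
Lemma Bj (G : Ob C) (a : Hom G Sig) : joinG (botG G) a = a.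
Proof. rewrite jC. apply jB. Qed.

Lemma leE_ptw (G X : Ob C) (f g : Hom G (Exp X)) :
  leE f g <-> leS (app (comp f cp1) cp2) (app (comp g cp1) cp2).
Proof. unfold leE, meetE, leS, wk. split; intro H.
  - apply lam_inj. rewrite lamE. exact H.
  - rewrite <- H. symmetry. apply lamE.
Qed.

Lemma mono_ap (G X : Ob C) (Phi : Hom G (Exp (Exp X))) (f g : Hom G (Exp X)) :
  leE f g -> leS (app Phi f) (app Phi g).
Proof.
  intro H. apply leE_ptw in H. apply leJ in H.
  pose (Hm := lam (app (comp Phi cp1) (lam (joinG (app (comp f (comp cp1 cp1)) cp2)
                 (meetG (comp cp2 cp1) (app (comp g (comp cp1 cp1)) cp2)))))).
  assert (E1 : app Hm (botG G) = app Phi f).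
  { unfold Hm. cs. rewrite Bm, jB, lamE. reflexivity. }
  assert (E2 : app Hm (topG G) = app Phi g).
  { unfold Hm. cs. rewrite Tm, H, lamE. reflexivity. }
  rewrite <- E1, <- E2. apply phoa_mono. apply bot_le.
Qed.

Lemma le_comp (D G : Ob C) (a b : Hom G Sig) (t : Hom D G) :
  leS a b -> leS (comp a t) (comp b t).
Proof. unfold leS. intro H. rewrite H at 1. apply meetc. Qed.

Lemma str_ap (G X : Ob C) (Phi : Hom G (Exp (Exp X))) (th : Hom G (Exp X)) (s : Hom G Sig) :
  leS (meetG s (app Phi th)) (app Phi (lam (meetG (comp s cp1) (app (comp th cp1) cp2)))).
Proof.
  pose (Hm := lam (app (comp Phi cp1) (lam (meetG (comp cp2 cp1) (app (comp th (comp cp1 cp1)) cp2))))).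
  assert (E1 : app Hm (topG G) = app Phi th).
  { unfold Hm. cs. rewrite Tm, lamE. reflexivity. }
  assert (E2 : app Hm s = app Phi (lam (meetG (comp s cp1) (app (comp th cp1) cp2)))).
  { unfold Hm. cs. reflexivity. }
  rewrite <- E1, <- E2, <- strength. apply meet_r.
Qed.

Section Ex.
Context {N : Ob C} (o : OvertDiscrete N).

Lemma ex_le_wk (G : Ob C) (b : Hom (cprod G N) Sig) : leS b (comp (exN o b) cp1).
Proof.
  assert (H : leS (comp (exd o) (lam b)) (exN o b)) by apply le_refl.
  apply (exd_adj o) in H. apply leE_ptw in H. revert H. unfold wk. cs. auto.
Qed.
Lemma ex_elim (G : Ob C) (b : Hom (cprod G N) Sig) (s : Hom G Sig) :
  leS b (comp s cp1) -> leS (exN o b) s.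
Proof.
  intro H. apply (exd_adj o). apply leE_ptw. unfold wk. cs. exact H.
Qed.
Lemma ex_intro (G : Ob C) (b : Hom (cprod G N) Sig) (n : Hom G N) :
  leS (comp b (cpair (idm G) n)) (exN o b).
Proof.
  pose proof (le_comp (cpair (idm G) n) (ex_le_wk b)) as H. revert H. cs. auto.
Qed.
Lemma ex_mono (G : Ob C) (b1 b2 : Hom (cprod G N) Sig) :
  leS b1 b2 -> leS (exN o b1) (exN o b2).
Proof. intro H. apply ex_elim. eapply le_trans. exact H. apply ex_le_wk. Qed.
Lemma frob (G : Ob C) (s : Hom G Sig) (b : Hom (cprod G N) Sig) :
  meetG s (exN o b) = exN o (meetG (comp s cp1) b).
Proof.
  apply le_anti.
  - pose (Hm := lam (exN o (meetG (comp cp2 cp1) (comp b (cpair (comp cp1 cp1) cp2))))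
                : Hom G (Exp Sig)).
    assert (E1 : app Hm (topG G) = exN o b).
    { unfold Hm. cs. rewrite Tm. reflexivity. }
    assert (E2 : app Hm s = exN o (meetG (comp s cp1) b)).
    { unfold Hm. cs. reflexivity. }
    rewrite <- E1, <- E2, <- strength. apply meet_r.
  - apply ex_elim. rewrite meetc. apply meet_mono. apply le_refl. apply ex_le_wk.
Qed.
Lemma exN_join (G : Ob C) (a b : Hom (cprod G N) Sig) :
  exN o (joinG a b) = joinG (exN o a) (exN o b).
Proof.
  apply le_anti.
  - apply ex_elim. rewrite joinc. apply join_mono; apply ex_le_wk.
  - apply join_le; apply ex_mono; [apply join_l|apply join_r].
Qed.
Lemma exN_bot (G : Ob C) : exN o (botG (cprod G N)) = botG G.
Proof. apply le_anti. apply ex_elim. cs. apply le_refl. apply bot_le. Qed.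

End Ex.
End All.
Section Sub.
Context (M : ASDModel).
Local Notation C := (cat M).
Local Notation L := (cat_laws M).
Ltac cs := repeat (rewrite ?(cA L), ?(c1p L), ?(c2p L), ?(c1pr L), ?(c2pr L), ?(cpc L),
   ?(cidl L), ?(cidr L), ?(p12 L), ?(peta L), ?(bangc L), ?(appc L), ?(meetc L), ?(joinc L),
   ?(topc L), ?(botc L), ?(lamc L), ?(betaL L), ?(exNc L)).
Context {N : Ob C} (o : OvertDiscrete N).

Lemma nucE (G : Ob C) :
  @nucleus C (cprod G (cprod N N)) (lam (meetG (comp (eqd o) (comp cp2 cp2)) (app cp1 cp2))).

Proof.
  intros D F. unfold wk. cs. f_equal.
  set (sg := comp (eqd o) (comp cp2 cp2) : Hom (cprod D (cprod G (cprod N N))) Sig).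
  pose (Hm := lam (app (comp F (comp cp1 cp1)) (lam (meetG (comp cp2 cp1) (app cp2 (comp cp2 (comp cp1 cp1))))))
     : Hom (cprod D (cprod G (cprod N N))) (Exp Sig)).
  assert (E1 : app Hm (topG _) = app (comp F cp1) (lam (app cp2 (comp cp2 cp1)))).
  { unfold Hm. cs. rewrite (Tm L). reflexivity. }
  assert (E2 : app Hm sg = app (comp F cp1)
          (lam (meetG (comp (eqd o) (comp cp2 (comp cp2 cp1))) (app cp2 (comp cp2 cp1))))).
  { unfold Hm, sg. cs. reflexivity. }
  pose proof (strength L Hm sg) as H. rewrite E1, E2 in H. unfold sg in H. symmetry. exact H.
Qed.

Lemma sub (G : Ob C) (th : Hom (cprod G N) Sig) (p m : Hom G N) :
  meetG (comp (eqd o) (cpair p m)) (comp th (cpair (idm G) p)) =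
  meetG (comp (eqd o) (cpair p m)) (comp th (cpair (idm G) m)).
Proof.
  destruct (nucleus_split (nucE (G:=G))) as [X' [i [I [_ [H1 H2]]]]].
  set (E := lam (meetG (comp (eqd o) (comp cp2 cp2)) (app cp1 cp2))
      : Hom (Exp (cprod G (cprod N N))) (Exp (cprod G (cprod N N)))) in *.
  assert (H3 : comp (SigMap i) E = SigMap i).
  { rewrite <- H2, <- (cA L), H1. apply (cidl L). }
  assert (H4 : forall g : Hom (cprod one (cprod G (cprod N N))) Sig,
     comp (SigMap i) (comp E (lam g)) = comp (SigMap i) (lam g)).
  { intro g. rewrite <- (cA L), H3. reflexivity. }
  assert (H5 : comp (eqd o) (comp cp2 (comp i (cp2 (X:=one)))) = topG _).
  { pose proof (H4 (topG _)) as H. revert H. unfold E, SigMap. cs. intro H.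
    apply (lam_inj L) in H. rewrite (mT L) in H. exact H. }
  rewrite <- (peta L (comp cp2 (comp i cp2))) in H5.
  apply (eqd_spec o) in H5.
  set (g1 := comp th (cpair (comp cp1 cp2) (comp cp1 (comp cp2 cp2)))
     : Hom (cprod one (cprod G (cprod N N))) Sig).
  set (g2 := comp th (cpair (comp cp1 cp2) (comp cp2 (comp cp2 cp2)))
     : Hom (cprod one (cprod G (cprod N N))) Sig).
  assert (H6 : comp (SigMap i) (lam g1) = comp (SigMap i) (lam g2)).
  { unfold g1, g2, SigMap. cs. rewrite H5. reflexivity. }
  assert (H7 : comp E (lam g1) = comp E (lam g2)).
  { rewrite <- H2, !(cA L), H6. reflexivity. }
  unfold E, g1, g2 in H7. revert H7. cs. intro H7. apply (lam_inj L) in H7.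
  apply (f_equal (fun h => comp h (cpair (bang G) (cpair (idm G) (cpair p m))))) in H7.
  revert H7. cs. auto.
Qed.

Lemma ex_eq (G : Ob C) (th : Hom (cprod G N) Sig) (m : Hom G N) :
  exN o (meetG (comp (eqd o) (cpair cp2 (comp m cp1))) th) = comp th (cpair (idm G) m).
Proof.
  apply (le_anti L).
  - apply (ex_elim L).
    pose proof (sub (comp th (cpair (comp cp1 cp1) cp2)) cp2 (comp m cp1)) as H.
    revert H. cs. intro H. rewrite H. apply (meet_r L).
  - eapply (le_trans L); [|apply (ex_intro L)]. cs.
    assert (E : comp (eqd o) (cpair m m) = topG G) by (apply (eqd_spec o); reflexivity).
    rewrite E, (Tm L). apply (le_refl L).
Qed.

Notation Fin o := (FinN (fin o)).
Definition mem := memb o (fin o).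

Lemma memb_nil (G : Ob C) (n : Hom G N) :
  comp mem (cpair n (comp (lnil (fin o)) (bang G))) = botG G.
Proof.
  pose proof (f_equal (fun h => comp h n) (lrec_nil (fin o) (botG N)
    (joinG (comp (eqd o) (cpair (comp cp1 cp1) (comp cp2 cp1))) cp2))) as H.
  cbv beta in H. unfold mem, memb. revert H. cs. auto.
Qed.
Lemma memb_cons (G : Ob C) (n m : Hom G N) (l : Hom G (Fin o)) :
  comp mem (cpair n (comp (lcons (fin o)) (cpair m l))) =
  joinG (comp (eqd o) (cpair n m)) (comp mem (cpair n l)).
Proof.
  pose proof (f_equal (fun h => comp h (cpair (cpair n m) l)) (lrec_cons (fin o) (botG N)
    (joinG (comp (eqd o) (cpair (comp cp1 cp1) (comp cp2 cp1))) cp2))) as H.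
  cbv beta in H. unfold mem, memb. revert H. cs. auto.
Qed.
Lemma allIn_nil (G : Ob C) (xi : Hom G (Exp N)) :
  comp (allIn (fin o)) (cpair xi (comp (lnil (fin o)) (bang G))) = topG G.
Proof.
  pose proof (f_equal (fun h => comp h xi) (lrec_nil (fin o) (topG (Exp N))
    (meetG (app (comp cp1 cp1) (comp cp2 cp1)) cp2))) as H.
  cbv beta in H. unfold allIn. revert H. cs. auto.
Qed.
Lemma allIn_cons (G : Ob C) (xi : Hom G (Exp N)) (m : Hom G N) (l : Hom G (Fin o)) :
  comp (allIn (fin o)) (cpair xi (comp (lcons (fin o)) (cpair m l))) =
  meetG (app xi m) (comp (allIn (fin o)) (cpair xi l)).
Proof.
  pose proof (f_equal (fun h => comp h (cpair (cpair xi m) l)) (lrec_cons (fin o) (topG (Exp N))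
    (meetG (app (comp cp1 cp1) (comp cp2 cp1)) cp2))) as H.
  cbv beta in H. unfold allIn. revert H. cs. auto.
Qed.
End Sub.
Section Main.
Context (M : ASDModel).
Local Notation C := (cat M).
Local Notation L := (cat_laws M).
Local Notation Fin o := (FinN (fin o)).
Ltac cs := repeat (rewrite ?(cA L), ?(c1p L), ?(c2p L), ?(c1pr L), ?(c2pr L), ?(cpc L),
   ?(cidl L), ?(cidr L), ?(p12 L), ?(peta L), ?(bangc L), ?(appc L), ?(meetc L), ?(joinc L),
   ?(topc L), ?(botc L), ?(lamc L), ?(betaL L), ?(exNc L)).
Context (X N : Ob C) (o : OvertDiscrete N)
  (beta : Hom N (Exp X)) (A : Hom N (Exp (Exp X))) (z : Hom one N) (pl : Hom (cprod N N) N).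
Context (eb : effective_basis o beta A)
  (bz : comp beta z = botE one X) (az : comp A z = topE one (Exp X))
  (bpl : forall (G : Ob C) (n m : Hom G N),
      comp beta (comp pl (cpair n m)) = joinE (comp beta n) (comp beta m))
  (apl : forall (G : Ob C) (n m : Hom G N),
      comp A (comp pl (cpair n m)) = meetE (comp A n) (comp A m)).

Lemma bz' (G : Ob C) (s : Hom G one) : comp beta (comp z s) = lam (botG (cprod G X)).
Proof. rewrite <- (cA L), bz. unfold botE. cs. reflexivity. Qed.
Lemma az' (G : Ob C) (s : Hom G one) : comp A (comp z s) = lam (topG (cprod G (Exp X))).
Proof. rewrite <- (cA L), az. unfold topE. cs. reflexivity. Qed.

Definition Ssum : Hom (cprod one (Fin o)) N :=
  lrec (fin o) (G:=one) z (comp pl (cpair (comp cp2 cp1) cp2)).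

Lemma S_nil (G : Ob C) : comp Ssum (cpair (bang G) (comp (lnil (fin o)) (bang G))) = comp z (bang G).
Proof.
  pose proof (f_equal (fun h => comp h (bang G)) (lrec_nil (fin o) z (comp pl (cpair (comp cp2 cp1) cp2)))) as H.
  cbv beta in H. unfold Ssum. revert H. cs. auto.
Qed.
Lemma S_cons (G : Ob C) (m : Hom G N) (l : Hom G (Fin o)) :
  comp Ssum (cpair (bang G) (comp (lcons (fin o)) (cpair m l))) =
  comp pl (cpair m (comp Ssum (cpair (bang G) l))).
Proof.
  pose proof (f_equal (fun h => comp h (cpair (cpair (bang G) m) l))
     (lrec_cons (fin o) z (comp pl (cpair (comp cp2 cp1) cp2)))) as H.
  cbv beta in H. unfold Ssum. revert H. cs. auto.
Qed.

Lemma memb_sum0 :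
  exN o (meetG (comp (mem o) (cpair cp2 (comp cp2 cp1))) (app (comp beta cp2) (comp cp1 cp1)))
  = app (comp beta (comp Ssum (cpair (bang _) cp2))) (cp1 (X:=X) (Y:=Fin o)).
Proof.
  set (h := joinG (app (comp beta (comp cp2 cp1)) (comp cp1 cp1)) cp2
           : Hom (cprod (cprod X N) Sig) Sig).
  transitivity (lrec (fin o) (botG X) h); [|symmetry]; apply lrec_uniq.
  - cs. rewrite (memb_nil (M:=M)). rewrite (Bm L). apply (exN_bot L).
  - unfold h. cs. rewrite (memb_cons (M:=M)). rewrite (mDr L), (exN_join L).
    pose proof (ex_eq (M:=M) o (app (comp beta cp2) (comp cp1 (comp cp1 cp1)))
        (comp cp2 (cp1 (X:=cprod X N) (Y:=Fin o)))) as E.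
    revert E. cs. intro E. rewrite E. reflexivity.
  - cs. rewrite S_nil, bz'. cs. reflexivity.
  - unfold h. cs. rewrite S_cons, bpl. unfold joinE, wk. cs. reflexivity.
Qed.

Lemma memb_sum (G : Ob C) (l : Hom G (Fin o)) (x : Hom G X) :
  exN o (meetG (comp (mem o) (cpair cp2 (comp l cp1))) (app (comp beta cp2) (comp x cp1)))
  = app (comp beta (comp Ssum (cpair (bang G) l))) x.
Proof.
  pose proof (f_equal (fun h => comp h (cpair x l)) memb_sum0) as H. cbv beta in H.
  revert H. cs. auto.
Qed.

Lemma allIn_sum0 :
  comp (allIn (fin o)) (cpair (lam (app (comp A cp2) (comp cp1 cp1))) cp2)
  = app (comp A (comp Ssum (cpair (bang _) cp2))) (cp1 (X:=Exp X) (Y:=Fin o)).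
Proof.
  set (h := meetG (app (comp A (comp cp2 cp1)) (comp cp1 cp1)) cp2
           : Hom (cprod (cprod (Exp X) N) Sig) Sig).
  transitivity (lrec (fin o) (topG (Exp X)) h); [|symmetry]; apply lrec_uniq.
  - cs. rewrite (allIn_nil (M:=M)). reflexivity.
  - unfold h. cs. rewrite (allIn_cons (M:=M)). cs. reflexivity.
  - cs. rewrite S_nil, az'. cs. reflexivity.
  - unfold h. cs. rewrite S_cons, apl. unfold meetE, wk. cs. reflexivity.
Qed.

Lemma allIn_sum (G : Ob C) (phi : Hom G (Exp X)) (l : Hom G (Fin o)) :
  comp (allIn (fin o)) (cpair (lam (app (comp A cp2) (comp phi cp1))) l)
  = app (comp A (comp Ssum (cpair (bang G) l))) phi.
Proof.
  pose proof (f_equal (fun h => comp h (cpair phi l)) allIn_sum0) as H. cbv beta in H.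
  revert H. cs. auto.
Qed.

Lemma eb_pt (D : Ob C) (psi : Hom D (Exp X)) (n : Hom D N) (x : Hom D X) :
  leS (meetG (app (comp A n) psi) (app (comp beta n) x)) (app psi x).
Proof.
  pose proof (f_equal (fun f => app f x) (eb psi)) as H. cbv beta in H.
  revert H. cs. intro H. rewrite H.
  eapply (le_trans L); [|apply (ex_intro L) with (n:=n)]. cs. apply (le_refl L).
Qed.

Lemma scottB (G : Ob C) (Phi : Hom G (Exp (Exp X))) (phi : Hom G (Exp X)) :
  app Phi phi = exN o (meetG (app (comp Phi cp1) (comp beta cp2)) (app (comp A cp2) (comp phi cp1))).
Proof.
  apply (le_anti L).
  - set (Psi := lam (app (comp Phi cp1) (lam (exN o (meetG (app (comp cp2 (comp cp1 cp1)) cp2)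
                   (app (comp beta cp2) (comp cp2 cp1)))))) : Hom G (Exp (Exp N))).
    set (xi0 := lam (app (comp A cp2) (comp phi cp1)) : Hom G (Exp N)).
    assert (E : app Psi xi0 = app Phi phi).
    { unfold Psi, xi0. cs. rewrite <- (eb phi). reflexivity. }
    rewrite <- E, (scott o Psi xi0).
    apply (ex_elim L). change (memb o (fin o)) with (mem o). unfold wk, Psi, xi0. cs.
    pose proof (memb_sum (comp cp2 cp1) (cp2 (X:=cprod G (Fin o)) (Y:=X))) as H1.
    revert H1. cs. intro H1. rewrite H1.
    pose proof (allIn_sum (comp phi cp1) (cp2 (X:=G) (Y:=Fin o))) as H2.
    revert H2. cs. intro H2. rewrite H2.
    assert (H3 : lam (app (comp beta (comp Ssum (cpair (bang _) (comp cp2 cp1)))) cp2)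
       = comp beta (comp Ssum (cpair (bang (cprod G (Fin o))) cp2))).
    { rewrite <- (lamE L (comp beta (comp Ssum (cpair (bang (cprod G (Fin o))) cp2)))). cs. reflexivity. }
    rewrite H3.
    eapply (le_trans L); [|apply (ex_intro L) with (n:=comp Ssum (cpair (bang _) cp2))].
    cs. apply (le_refl L).
  - apply (ex_elim L). cs. rewrite (mC L). eapply (le_trans L); [apply (str_ap L)|].
    apply (mono_ap L). apply (leE_ptw L). cs. apply eb_pt.
Qed.

Lemma join_part (G : Ob C) (n : Hom G N) (phi psi : Hom G (Exp X)) :
     Aapp A n (joinE phi psi) =
       exN o (exN o
         (meetG (wb beta A (comp n (comp cp1 cp1)) (comp pl (cpair (comp cp2 cp1) cp2)))
           (meetG (Aapp A (comp cp2 cp1) (comp phi (comp cp1 cp1)))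
                  (Aapp A cp2 (comp psi (comp cp1 cp1)))))).
Proof.
  set (Phi := lam (app (comp A (comp n cp1)) (joinE cp2 (comp psi cp1))) : Hom G (Exp (Exp X))).
  assert (E1 : Aapp A n (joinE phi psi) = app Phi phi).
  { unfold Phi, Aapp, joinE, wk. cs. reflexivity. }
  rewrite E1, (scottB Phi phi).
  set (Phi2 := lam (app (comp A (comp n (comp cp1 cp1))) (joinE (comp beta (comp cp2 cp1)) cp2))
        : Hom (cprod G N) (Exp (Exp X))).
  assert (E2 : app (comp Phi cp1) (comp beta cp2) = app Phi2 (comp psi cp1)).
  { unfold Phi, Phi2, joinE, wk. cs. reflexivity. }
  rewrite E2, (scottB Phi2 (comp psi cp1)).
  assert (E3 : app (comp Phi2 cp1) (comp beta cp2) =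
     wb beta A (comp n (comp cp1 cp1)) (comp pl (cpair (comp cp2 cp1) cp2))).
  { unfold Phi2, wb, Aapp. rewrite bpl. unfold joinE, wk. cs. reflexivity. }
  rewrite E3. rewrite (mC L), (frob L). f_equal. f_equal. unfold Aapp. cs.
  rewrite (mA L), (mC L _ (wb _ _ _ _)), <- (mA L). reflexivity.
Qed.
Lemma meet_part (st : Hom (cprod N N) N) (bst : forall (G : Ob C) (n m : Hom G N),
      comp beta (comp st (cpair n m)) = meetE (comp beta n) (comp beta m)) (G : Ob C) (n : Hom G N) (phi psi : Hom G (Exp X)) :
     Aapp A n (meetE phi psi) =
       exN o (exN o
         (meetG (wb beta A (comp n (comp cp1 cp1)) (comp st (cpair (comp cp2 cp1) cp2)))
           (meetG (Aapp A (comp cp2 cp1) (comp phi (comp cp1 cp1)))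
                  (Aapp A cp2 (comp psi (comp cp1 cp1)))))).
Proof.
  set (Phi := lam (app (comp A (comp n cp1)) (meetE cp2 (comp psi cp1))) : Hom G (Exp (Exp X))).
  assert (E1 : Aapp A n (meetE phi psi) = app Phi phi).
  { unfold Phi, Aapp, meetE, wk. cs. reflexivity. }
  rewrite E1, (scottB Phi phi).
  set (Phi2 := lam (app (comp A (comp n (comp cp1 cp1))) (meetE (comp beta (comp cp2 cp1)) cp2))
        : Hom (cprod G N) (Exp (Exp X))).
  assert (E2 : app (comp Phi cp1) (comp beta cp2) = app Phi2 (comp psi cp1)).
  { unfold Phi, Phi2, meetE, wk. cs. reflexivity. }
  rewrite E2, (scottB Phi2 (comp psi cp1)).
  assert (E3 : app (comp Phi2 cp1) (comp beta cp2) =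
     wb beta A (comp n (comp cp1 cp1)) (comp st (cpair (comp cp2 cp1) cp2))).
  { unfold Phi2, wb, Aapp. rewrite bst. unfold meetE, wk. cs. reflexivity. }
  rewrite E3. rewrite (mC L), (frob L). f_equal. f_equal. unfold Aapp. cs.
  rewrite (mA L), (mC L _ (wb _ _ _ _)), <- (mA L). reflexivity.
Qed.
End Main.
Unset Implicit Arguments.
Set Strict Implicit.
Theorem lemma11p8 (M : ASDModel) (X N : Ob (cat M)) (o : OvertDiscrete N)
  (beta : Hom N (Exp X)) (A : Hom N (Exp (Exp X)))
  (z : Hom one N) (pl : Hom (cprod N N) N) (u : Hom one N) (st : Hom (cprod N N) N) :
  lattice_basis o beta A z pl u st ->
  (forall (G : Ob (cat M)) (n : Hom G N) (phi psi : Hom G (Exp X)),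
     Aapp A n (topE G X) = wb beta A n (comp u (bang G)) /\
     Aapp A n (botE G X) = wb beta A n (comp z (bang G)) /\
     Aapp A n (meetE phi psi) =
       exN o (exN o
         (meetG (wb beta A (comp n (comp cp1 cp1)) (comp st (cpair (comp cp2 cp1) cp2)))
           (meetG (Aapp A (comp cp2 cp1) (comp phi (comp cp1 cp1)))
                  (Aapp A cp2 (comp psi (comp cp1 cp1)))))) /\
     Aapp A n (joinE phi psi) =
       exN o (exN o
         (meetG (wb beta A (comp n (comp cp1 cp1)) (comp pl (cpair (comp cp2 cp1) cp2)))
           (meetG (Aapp A (comp cp2 cp1) (comp phi (comp cp1 cp1)))
                  (Aapp A cp2 (comp psi (comp cp1 cp1))))))) /\
  (forall (G : Ob (cat M)) (n p q : Hom G N),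
     wb beta A n (comp pl (cpair p q)) =
       exN o (exN o
         (meetG (wb beta A (comp n (comp cp1 cp1)) (comp pl (cpair (comp cp2 cp1) cp2)))
           (meetG (wb beta A (comp cp2 cp1) (comp p (comp cp1 cp1)))
                  (wb beta A cp2 (comp q (comp cp1 cp1))))))).
Proof.
  intros [[eb [bz [az [bpl apl]]]] [_ [bu [bst _]]]].
  split.
  - intros G n phi psi. split; [|split; [|split]].
    + unfold wb, Aapp. rewrite (comp_assoc (cat_laws M)), bu.
      unfold topE. rewrite (lamc (cat_laws M)), (topc (cat_laws M)). reflexivity.
    + unfold wb, Aapp. rewrite (comp_assoc (cat_laws M)), bz.
      unfold botE. rewrite (lamc (cat_laws M)), (botc (cat_laws M)). reflexivity.
    + apply (meet_part eb bz az bpl apl bst).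
    + apply (join_part eb bz az bpl apl).
  - intros G n p q. unfold wb at 1. unfold Aapp at 1. rewrite bpl.
    pose proof (join_part eb bz az bpl apl n (comp beta p) (comp beta q)) as H.
    unfold Aapp at 1 in H. rewrite H. unfold wb.
    rewrite !(cA (cat_laws M)). reflexivity.
Qed.
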